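(* Let $c\in\,]0,1[$ and $r=1-c$. For every real $t\ge 1$: (i) for all $\lambda\in[0,r]$, $\lambda^{2t}\le \lambda e^{-ct}$; (ii) for all $\lambda\in[r,1]$, $\lambda^{2t}\le e^{(\lambda-1)t}-e^{-ct}+\lambda e^{-ct}$; (iii) for all $\lambda\in[0,1]$, $e^{-2t}\big(e^{2\lambda t}-1\big)\le 2\lambda t e^{-t}+\lambda^{t}$. *)

(* Defs.v *)
From Stdlib Require Import Reals.
Open Scope R_scope.

(* Real power x^y for x >= 0: 0^y = 0 (used only with y > 0),
   x^y = exp (y ln x) for x > 0.  (Stdlib's Rpower gives 0^y = 1,
   which is the wrong convention at x = 0.) *)
Definition rpow (x y : R) : R := if Rle_dec x 0 then 0 else Rpower x y.

(* Main.v *)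
Require Import Defs.
From Stdlib Require Import Reals Lra.
Open Scope R_scope.

Lemma expLe (x y : R) : x <= y -> exp x <= exp y.
Proof. intros [H|H]; [left; apply exp_increasing; auto | subst; lra]. Qed.

Lemma lnLe (x y : R) : 0 < x -> x <= y -> ln x <= ln y.
Proof. intros Hx [H|H]; [left; apply ln_increasing; auto | subst; lra]. Qed.

Lemma rpow_pos (l y : R) : 0 < l -> rpow l y = exp (y * ln l).
Proof. intros H. unfold rpow, Rpower. destruct (Rle_dec l 0); [lra|reflexivity]. Qed.

Lemma rpow_ge0 (l y : R) : 0 <= rpow l y.
Proof. unfold rpow, Rpower. destruct (Rle_dec l 0); [lra|left; apply exp_pos]. Qed.

Lemma key (l s t : R) : 1 <= t -> 0 < l -> 0 <= s -> l <= exp (- s) ->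
  rpow l (2 * t) <= l * exp (- s * t).
Proof.
  intros ht hl hs hle. rewrite rpow_pos by lra.
  assert (hln : ln l <= - s) by (rewrite <- (ln_exp (- s)); apply lnLe; auto).
  replace (l * exp (- s * t)) with (exp (ln l + - s * t))
    by (rewrite exp_plus, exp_ln; auto).
  apply expLe. nra.
Qed.

Theorem lemma2 (c : R) (hc0 : 0 < c) (hc1 : c < 1) (t : R) (ht : 1 <= t) :
  let r := 1 - c in
  (forall l : R, 0 <= l <= r -> rpow l (2 * t) <= l * exp (- c * t)) /\
  (forall l : R, r <= l <= 1 ->
     rpow l (2 * t) <= exp ((l - 1) * t) - exp (- c * t) + l * exp (- c * t)) /\
  (forall l : R, 0 <= l <= 1 ->
     exp (- 2 * t) * (exp (2 * l * t) - 1) <= 2 * l * t * exp (- t) + rpow l t).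
Proof.
  intros r; unfold r; split; [|split].
  - intros l [h0 h1]. destruct h0 as [h0|h0].
    + apply key; try lra. pose proof (exp_ineq1_le (- c)). lra.
    + subst l. unfold rpow. destruct (Rle_dec 0 0); lra.
  - intros l [h0 h1].
    assert (H := key l (1 - l) t ht ltac:(lra) ltac:(lra)
                  ltac:(pose proof (exp_ineq1_le (- (1 - l))); lra)).
    replace (- (1 - l) * t) with ((l - 1) * t) in H by ring.
    assert (E : exp (- c * t) <= exp ((l - 1) * t)) by (apply expLe; nra).
    pose proof (exp_pos ((l - 1) * t)). nra.
  - intros l [h0 h1].
    assert (Hp : 0 < exp (- 2 * t)) by apply exp_pos.
    destruct (Rle_dec l (1/2)) as [hl|hl].
    + set (x := 2 * l * t).
      assert (H1 : exp x - 1 <= x * exp x).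
      { pose proof (exp_ineq1_le (- x)).
        assert (exp (- x) * exp x = 1) by (rewrite <- exp_plus; replace (-x + x) with 0 by ring; apply exp_0).
        pose proof (exp_pos x). nra. }
      assert (H2 : exp (- 2 * t) * exp x <= exp (- t)).
      { rewrite <- exp_plus. apply expLe. unfold x. nra. }
      pose proof (rpow_ge0 l t). assert (0 <= x) by (unfold x; nra).
      assert (exp (- 2 * t) * (exp x - 1) <= exp (- 2 * t) * (x * exp x))
        by (apply Rmult_le_compat_l; lra).
      nra.
    + rewrite rpow_pos by lra.
      assert (hln : 1 - / l <= ln l).
      { pose proof (exp_ineq1_le (ln (/ l))). rewrite exp_ln in H by (apply Rinv_0_lt_compat; lra).
        rewrite ln_Rinv in H by lra. lra. }
      assert (hq : 2 * (l - 1) <= 1 - / l).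
      { assert (/ l <= 2).
        { replace 2 with (/ / 2) by (field). apply Rinv_le_contravar; lra. }
        assert (l * / l = 1) by (field; lra).
        assert (0 <= (1 - l) * (2 - / l)) by (apply Rmult_le_pos; lra).
        set (il := / l) in *. nra. }
      assert (E : exp (- 2 * t) * exp (2 * l * t) <= exp (t * ln l)).
      { rewrite <- exp_plus. apply expLe. nra. }
      assert (0 <= 2 * l * t * exp (- t)) by (apply Rmult_le_pos; [nra| left; apply exp_pos]).
      nra.
Qed.
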